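(* Let $R_X\subseteq U_X$ be given and let $\nu,\gamma,G_X,B_X,\sigma^2$ be defined from $(f,\mathcal{T},R_X)$ as in the context. Define $B_\eta:=\min\{\sigma^2,\,1-\nu^2\}$. Let $\eta\in(0,B_\eta)$, put $\tau:=\sqrt{1-\eta}$, and let $$R'_X:=\{x\in U_X:\ \Pr_{h\sim\mathcal{T}}[h(x)=f(x)]<\tau\}.$$ Then: (i) $|R'_X\cap(U_X\setminus W_X)|\le \frac{\nu}{1-\tau}\,|U_X\setminus W_X|$; (ii) $\left(1-\frac{\gamma}{\tau}\right)|R_X|\le |R_X\cap R'_X|$; (iii) $G_X\subseteq R'_X$; (iv) $|R'_X\cap B_X|\ge \frac{\sigma^2-\eta}{1-\eta}\,|B_X|$.
   Context: Setting. $\mathcal{X}$ is an input set and $\mathcal{Y}$ a finite set of labels. $U$ is a finite nonempty set of labeled test points $(x,y_x)$ with $x\in\mathcal{X}$, $y_x\in\mathcal{Y}$ and distinct inputs; $U_X$ is its set of inputs. All probabilities and expectations over $x$ (or $(x,y_x)$) are with respect to the uniform distribution on $U$ (or on the indicated subset when conditioning). $f:\mathcal{X}\to\mathcal{Y}$ is a fixed classifier. $\mathcal{T}$ is a probability distribution on a set of classifiers $h:\mathcal{X}\to\mathcal{Y}$ (an ensemble); $h\sim\mathcal{T}$ is drawn independently of $x$. $W_X:=\{x\in U_X: f(x)\neq y_x\}$ is the set of misclassified points, $e_f:=|W_X|/|U_X|$ and $\mathrm{acc}(f):=1-e_f$. For $x\in U_X$ the diversity is $\sigma_x^2:=1-\sum_{y\in\mathcal{Y}}\big(\Pr_{h\sim\mathcal{T}}[h(x)=y]\big)^2=1-\Pr_{h_1,h_2\sim\mathcal{T}\text{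 i.i.d.}}[h_1(x)=h_2(x)]$. Quantities relative to a set $R_X\subseteq U_X$: $\nu:=\Pr_{(x,y_x)\sim U,\,h\sim\mathcal{T}}[h(x)\neq y_x\mid f(x)=y_x]$ (set $\nu:=0$ if $U_X\setminus W_X=\emptyset$); $\gamma:=\Pr_{x\sim R_X,\,h\sim\mathcal{T}}[h(x)=f(x)]$ with $x$ uniform on $R_X$ (set $\gamma:=0$ if $R_X=\emptyset$); $G_X:=\{x\in W_X\setminus R_X:\ \Pr_{h\sim\mathcal{T}}[h(x)=y_x]\ge 1-\nu\}$; $B_X:=W_X\setminus(R_X\cup G_X)$; $\sigma^2:=\mathbb{E}[\sigma_x^2\mid x\in B_X]$, the average of $\sigma_x^2$ over $B_X$ (set $\sigma^2:=1$ if $B_X=\emptyset$). *)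

(* Defs.v *)
From mathcomp Require Import all_boot all_order all_algebra.
Set Implicit Arguments. Unset Strict Implicit. Unset Printing Implicit Defensive.
Import Order.TTheory GRing.Theory Num.Theory.
Local Open Scope ring_scope.

(* Setting:
   - X : input type (eqType), Y : finite label type.
   - UX : seq X, the (duplicate-free, nonempty) list of test inputs; lab x = y_x.
   - The ensemble T is a finite weighted family of classifiers:
     index type H : finType, weights w : H -> R (nonnegative, summing to 1),
     clf : H -> X -> Y.  Pr_{h~T}[P h] = \sum_(i | P (clf i)) w i.
   - Uniform distributions over finite sets of inputs are averages over UX. *)

Section Defs.
Variables (R : rcfType) (X : eqType) (Y : finType) (H : finType).
Variables (w : H -> R) (clf : H -> X -> Y).
Variables (UX : seq X) (lab : X -> Y) (f : X -> Y) (RX : pred X).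

Definition pAgree (x : X) (y : Y) : R := \sum_(i | clf i x == y) w i.

Definition pDisagree (x : X) (y : Y) : R := \sum_(i | clf i x != y) w i.

Definition diversity (x : X) : R := 1 - \sum_(y : Y) (pAgree x y) ^+ 2.

Definition misclassified (x : X) : bool := (x \in UX) && (f x != lab x).
Definition correct (x : X) : bool := (x \in UX) && (f x == lab x).

(* nu = Pr_{x~U, h~T}[h(x) <> y_x | f(x) = y_x], 0 if no correct point *)
Definition nu : R :=
  if count correct UX == 0%N then 0
  else (\sum_(x <- UX | correct x) pDisagree x (lab x))
       / (count correct UX)%:R.

(* gamma = Pr_{x ~ R_X, h ~ T}[h(x) = f(x)], 0 if R_X empty *)
Definition gamma : R :=
  if count RX UX == 0%N then 0
  else (\sum_(x <- UX | RX x) pAgree x (f x)) / (count RX UX)%:R.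

Definition GX (x : X) : bool :=
  [&& misclassified x, ~~ RX x & 1 - nu <= pAgree x (lab x)].

Definition BX (x : X) : bool :=
  [&& misclassified x, ~~ RX x & ~~ GX x].

(* sigma^2 = E[sigma_x^2 | x in B_X], 1 if B_X empty *)
Definition sigma2 : R :=
  if count BX UX == 0%N then 1
  else (\sum_(x <- UX | BX x) diversity x) / (count BX UX)%:R.

Definition Beta : R := Num.min sigma2 (1 - nu ^+ 2).

Definition RXprime (tau : R) (x : X) : bool :=
  (x \in UX) && (pAgree x (f x) < tau).

End Defs.

(* Main.v *)
Require Import Defs.
From mathcomp Require Import all_boot all_order all_algebra.
From mathcomp Require Import ring lra.
Import Order.TTheory GRing.Theory Num.Theory.
Local Open Scope ring_scope.

Lemma cnt_sumL (R : rcfType) (X : eqType) (P Q : pred X) (s : seq X) :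
  (count (fun x => Q x && P x) s)%:R = \sum_(x <- s | P x) (Q x)%:R :> R.
Proof.
elim: s => [|a s IH]; first by rewrite big_nil.
rewrite /= big_cons natrD IH; case: (P a); case: (Q a) => //=; by rewrite add0r.
Qed.

Lemma cnt_sum1 (R : rcfType) (X : eqType) (P : pred X) (s : seq X) :
  (count P s)%:R = \sum_(x <- s | P x) 1 :> R.
Proof.
rewrite -(eq_count (a1 := fun x => true && P x)) // cnt_sumL //.
Qed.

Lemma cnt_sumR (R : rcfType) (X : eqType) (P Q : pred X) (s : seq X) :
  (count (fun x => P x && Q x) s)%:R = \sum_(x <- s | P x) (Q x)%:R :> R.
Proof.
rewrite -(eq_count (a1 := fun x => Q x && P x)) ?cnt_sumL // => x; exact: andbC.
Qed.

Section Aux.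
Variables (R : rcfType) (X : eqType) (Y : finType) (H : finType).
Variables (w : H -> R) (clf : H -> X -> Y).
Hypothesis w0 : forall i, 0 <= w i.
Hypothesis w1 : \sum_i w i = 1.

Lemma pA_ge0 x y : 0 <= pAgree w clf x y.
Proof. by apply: sumr_ge0 => i _. Qed.

Lemma pD_ge0 x y : 0 <= pDisagree w clf x y.
Proof. by apply: sumr_ge0 => i _. Qed.

Lemma pAD x y : pAgree w clf x y + pDisagree w clf x y = 1.
Proof.
by rewrite -w1 (bigID (fun i => clf i x == y)) /=.
Qed.

Lemma pA_le_pD x y y' : y != y' -> pAgree w clf x y <= pDisagree w clf x y'.
Proof.
move=> ne; rewrite /pAgree /pDisagree [X in X <= _]big_mkcond [X in _ <= X]big_mkcond /=.
apply: ler_sum => i _; case: eqP => [->|_]; first by rewrite ne.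
by case: ifP.
Qed.

Lemma sq_le x y : pAgree w clf x y ^+ 2 <= \sum_(y0 : Y) pAgree w clf x y0 ^+ 2.
Proof.
rewrite (bigD1 y) //= lerDl; apply: sumr_ge0 => i _; exact: sqr_ge0.
Qed.
End Aux.

Theorem mainTheorem1 (R : rcfType) (X : eqType) (Y : finType) (H : finType)
    (w : H -> R) (clf : H -> X -> Y)
    (UX : seq X) (lab : X -> Y) (f : X -> Y) (RX : pred X) (eta : R) :
  (forall i, 0 <= w i) -> \sum_i w i = 1 ->
  uniq UX -> UX != [::] ->
  {subset RX <= UX} ->
  0 < eta -> eta < Beta w clf UX lab f RX ->
  let tau := Num.sqrt (1 - eta) in
  let R' := RXprime w clf UX f tau in
  let nuv := nu w clf UX lab f in
  let gam := gamma w clf UX f RX in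
  let s2 := sigma2 w clf UX lab f RX in
  let G := GX w clf UX lab f RX in
  let B := BX w clf UX lab f RX in
  [/\ (count (fun x => R' x && correct UX lab f x) UX)%:R
        <= nuv / (1 - tau) * (count (correct UX lab f) UX)%:R,
      (1 - gam / tau) * (count RX UX)%:R
        <= (count (fun x => RX x && R' x) UX)%:R,
      {subset G <= R'} &
      (count (fun x => R' x && B x) UX)%:R
        >= (s2 - eta) / (1 - eta) * (count B UX)%:R].
Proof.
move=> w0 w1 _ _ sRX eta0 etaB tau R' nuv gam s2 G B.
move: etaB; rewrite /Beta lt_min => /andP[etas2 etanu].
have nu0 : 0 <= nuv.
  rewrite /nuv /nu; case: ifP => // _.
  apply: divr_ge0; last exact: ler0n.
  by apply: sumr_ge0 => x _; apply: pD_ge0.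
have etanu' : eta < 1 - nuv ^+ 2 := etanu.
have nusq := sqr_ge0 nuv.
have e1 : 0 < 1 - eta by lra.
have tau0 : 0 <= tau by apply: sqrtr_ge0.
have tau2 : tau ^+ 2 = 1 - eta by apply: sqr_sqrtr; apply: ltW.
have taup : 0 < tau by rewrite sqrtr_gt0.
have tau1 : tau < 1 by nra.
have nutau : nuv < tau by nra.
split.
-
  rewrite /nuv /nu; case: ifP => [/eqP c0 | c0].
    have sb : subpred (fun x => R' x && correct UX lab f x) (correct UX lab f)
      by move=> x /andP[].
    have := sub_count sb UX.
    by rewrite c0 mulr0 leqn0 => /eqP ->.
  set S := \sum_(x <- UX | _) _.
  set n := (count (correct UX lab f) UX)%:R.
  have n0 : n != 0 by rewrite /n pnatr_eq0 c0.
  have t1 : 1 - tau != 0 by rewrite subr_eq0; apply/eqP => e; lra.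
  have -> : S / n / (1 - tau) * n = S / (1 - tau) by field; rewrite n0 t1.
  rewrite ler_pdivlMr ?subr_gt0 // cnt_sumL mulr_suml.
  apply: ler_sum => x; rewrite /correct => /andP[xU /eqP fl].
  rewrite /R' /RXprime xU /=; case: ltP => h.
    rewrite mul1r; have := @pAD _ _ _ _ w clf w1 x (lab x); rewrite -fl; lra.
  by rewrite mul0r; apply: pD_ge0.
- rewrite /gam /gamma; case: ifP => [/eqP c0 | c0].
    by rewrite c0 mulr0 ler0n.
  set S := \sum_(x <- UX | _) _.
  set n := (count RX UX)%:R.
  have n0 : n != 0 by rewrite /n pnatr_eq0 c0.
  have t0 : tau != 0 by rewrite gt_eqF.
  have -> : (1 - S / n / tau) * n = n - S / tau by field; rewrite n0 t0.
  have key : (n - (count (fun x => RX x && R' x) UX)%:R) * tau <= S.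
    rewrite /n cnt_sum1 cnt_sumR -sumrB mulr_suml.
    apply: ler_sum => x RXx; have xU := sRX x RXx.
    rewrite /R' /RXprime xU /=; case: ltP => h.
      by rewrite subrr mul0r; apply: pA_ge0.
    by rewrite subr0 mul1r.
  move: key; rewrite -ler_pdivlMr //; lra.
- move=> x; rewrite /G /GX /misclassified => /and3P[/andP[xU ne] _ h].
  rewrite /R' unfold_in /RXprime xU /=.
  have h' : 1 - nuv <= pAgree w clf x (lab x) := h.
  have := @pA_le_pD _ _ _ _ w clf w0 x _ _ ne; have := @pAD _ _ _ _ w clf w1 x (lab x); lra.
- rewrite /s2 /sigma2; case: ifP => [/eqP c0 | c0].
    by rewrite c0 mulr0 ler0n.
  set S := \sum_(x <- UX | _) _.
  set n := (count B UX)%:R.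
  have n0 : n != 0 by rewrite /n pnatr_eq0 c0.
  have e0 : 1 - eta != 0 by rewrite gt_eqF.
  have -> : (S / n - eta) / (1 - eta) * n = (S - eta * n) / (1 - eta)
    by field; rewrite n0 e0.
  set c := (count (fun x => R' x && B x) UX)%:R.
  have key : S <= c + eta * (n - c).
    rewrite /c /n cnt_sum1 cnt_sumL -sumrB mulr_sumr -big_split /=.
    apply: ler_sum => x; rewrite /B /BX /misclassified => /andP[/andP[xU _] _].
    have sq0 : 0 <= \sum_(y0 : Y) pAgree w clf x y0 ^+ 2
      by apply: sumr_ge0 => i _; exact: sqr_ge0.
    rewrite /diversity /R' /RXprime xU /=; case: ltP => h.
      rewrite subrr mulr0 addr0 (_ : true%:R = 1 :> R) //; lra.
    rewrite subr0 mulr1 add0r.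
    have := @sq_le _ _ _ _ w clf x (f x).
    have : tau * tau <= pAgree w clf x (f x) * pAgree w clf x (f x)
      by apply: ler_pM.
    rewrite -expr2; lra.
  rewrite ler_pdivrMr //; nra.
Qed.
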